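(* Let $s\ge4$ be an integer, $\psi_s(z):=z^{s-1}(z+s)-(s-1)^{s-1}$, and $\rho_m:=\min\{|s+\alpha|:\alpha$ a root of $\psi_s$ with $\operatorname{Im}\alpha>0\}$. (1) If $s$ is even then $\rho_m>s\sin(\pi/(s-1))>\pi$. (2) If $s\ge7$ is odd then $\rho_m>s\sin(2\pi/(s-1))$; if $s=5$ then $\rho_m>5\sin(2\pi/5)$.
   Context: For $s\ge4$, $\psi_s$ has $\lfloor s/2\rfloor-1\ge1$ roots in the open upper half-plane. *)

(* Defs.v *)
From HB Require Import structures.
From mathcomp Require Import all_boot all_order all_algebra.
From mathcomp Require Import complex.
From mathcomp Require Import all_classical all_reals all_analysis.
Set Implicit Arguments. Unset Strict Implicit. Unset Printing Implicit Defensive.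
Import Order.TTheory GRing.Theory Num.Theory.
Local Open Scope ring_scope.
Local Open Scope classical_set_scope.

Definition psi (R : realType) (s : nat) : {poly R[i]} :=
  'X^(s.-1) * ('X + (s%:R)%:P) - ((s.-1 ^ s.-1)%N%:R)%:P.

(* rho_m = min { |s + alpha| : alpha root of psi_s, Im alpha > 0 };
   the set is finite and (for s >= 4) nonempty, so its infimum is the minimum. *)
Definition cabs (R : realType) (z : R[i]) : R :=
  Num.sqrt (complex.Re z ^+ 2 + complex.Im z ^+ 2).

Definition rho_m (R : realType) (s : nat) : R :=
  inf [set cabs ((s%:R : R[i]) + a) | a in
        [set a : R[i] | root (psi R s) a /\ 0 < complex.Im a]].

(* Main.v *)
Require Import Defs.
From HB Require Import structures.
From mathcomp Require Import all_boot all_order all_algebra.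
From mathcomp Require Import complex.
From mathcomp Require Import all_classical all_reals all_analysis.
From mathcomp Require Import ring lra zify.
Import Order.TTheory GRing.Theory Num.Theory.
Import numFieldNormedType.Exports.
Local Open Scope ring_scope.
Local Open Scope classical_set_scope.
Section T.
Variable R : realType.

Lemma mvt0 (f df : R -> R) (x : R) :
  (forall y : R, is_derive y (1:R) f (df y)) -> 0 < x ->
  exists2 c, 0 < c < x & f x - f 0 = df c * x.
Proof.
move=> hd hx.
have [c hc' e] : exists2 c, c \in `]0, x[%R & f x - f 0 = df c * (x - 0).
  apply: MVT => //.
  have hc : continuous f.
    move=> y; apply/differentiable_continuous/derivable1_diffP.
    by apply: ex_derive; exact: hd.
  exact: (continuous_subspaceT hc).
by exists c; [rewrite in_itv /= in hc'| rewrite e subr0].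
Qed.

Lemma xcos_lt_sin (u : R) : 0 < u < pi -> u * cos u < sin u.
Proof.
move=> /andP[u0 upi].
have hd : forall y : R, is_derive y (1:R) (fun x : R => x * cos x - sin x) (- (y * sin y)).
  move=> y.
  have h := is_deriveB (is_deriveM (is_derive_id y 1) (is_derive_cos y)) (is_derive_sin y).
  refine (is_derive_eq h _).
  rewrite /GRing.scale /=. ring.
have [c /andP[c0 cu] e] := mvt0 _ _ _ hd u0.
rewrite mul0r sin0 subr0 in e.
rewrite subr0 in e.
rewrite -subr_lt0 e mulNr oppr_lt0 mulr_gt0 // mulr_gt0 //.
by apply: sin_gt0_pi; rewrite c0 /= (lt_trans cu upi).
Qed.

Lemma mvtab (f df : R -> R) (a b : R) :
  (forall y : R, is_derive y (1:R) f (df y)) -> a < b ->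
  exists2 c, a < c < b & f b - f a = df c * (b - a).
Proof.
move=> hd hx.
have [c hc' e] : exists2 c, c \in `]a, b[%R & f b - f a = df c * (b - a).
  apply: MVT => //.
  have hc : continuous f.
    move=> y; apply/differentiable_continuous/derivable1_diffP.
    by apply: ex_derive; exact: hd.
  exact: (continuous_subspaceT hc).
by exists c; [rewrite in_itv /= in hc'| rewrite e].
Qed.

Lemma nonneg_deriv (f df : R -> R) (x : R) :
  (forall y : R, is_derive y (1:R) f (df y)) -> (forall y, 0 < y -> 0 <= df y) ->
  0 <= x -> f 0 <= f x.
Proof.
move=> hd hpos; rewrite le_eqVlt => /orP[/eqP<-//|x0].
have [c /andP[c0 cx] e] := mvt0 _ _ _ hd x0.
by rewrite -subr_ge0 e mulr_ge0 // ?hpos // ltW.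
Qed.

Lemma sinc_lt (u v : R) : 0 < u -> u < v -> v <= pi -> u * sin v < v * sin u.
Proof.
move=> u0 uv vpi.
have [c /andP[uc cv] e] := mvtab _ _ _ _ (@is_derive_sin R) uv.
have upi : u < pi by apply: lt_le_trans vpi.
have h1 : u * cos u < sin u by apply: xcos_lt_sin; rewrite u0 upi.
have h2 : cos c < cos u.
  rewrite ltr_cos // in_itv /= ?(ltW u0) ?(ltW upi) //.
  by rewrite (ltW (lt_trans u0 uc)) (ltW (lt_le_trans cv vpi)).
have -> : sin v = sin u + cos c * (v - u) by rewrite -e; ring.
have vu : 0 < v - u by rewrite subr_gt0.
have h3 : u * cos c < u * cos u by rewrite ltr_pM2l.
have h4 : 0 < (v - u) * (sin u - u * cos c) by rewrite mulr_gt0 // subr_gt0 (lt_trans h3).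
rewrite -subr_gt0; apply: (lt_le_trans h4); rewrite le_eqVlt; apply/orP; left; apply/eqP; ring.
Qed.

Lemma sin_le_x (x : R) : 0 <= x -> sin x <= x.
Proof.
move=> x0.
have hd : forall y : R, is_derive y (1:R) (fun x : R => x - sin x) (1 - cos y).
  move=> y; refine (is_derive_eq (is_deriveB (is_derive_id y 1) (is_derive_sin y)) _).
  by [].
have h : forall y : R, 0 < y -> 0 <= 1 - cos y by move=> y _; rewrite subr_ge0 cos_le1.
have := nonneg_deriv _ _ _ hd h x0.
by rewrite /= sin0 subr0 subr_ge0.
Qed.

Lemma cos_ge (x : R) : 0 <= x -> 1 - x ^+ 2 / 2 <= cos x.
Proof.
move=> x0.
have hd : forall y : R, is_derive y (1:R) (fun x : R => cos x - 1 + x ^+ 2 / 2) (y - sin y).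
  move=> y; refine (is_derive_eq (is_deriveD (is_deriveB (is_derive_cos y) (is_derive_cst (1:R) y (1:R)))
     (is_deriveM (is_deriveX 2 (is_derive_id y 1)) (is_derive_cst (2^-1 : R) y (1:R)))) _).
  by rewrite /GRing.scale /=; field.
have h : forall z : R, 0 < z -> 0 <= z - sin z by move=> z hz; rewrite subr_ge0 sin_le_x // ltW.
have := nonneg_deriv _ _ _ hd h x0.
rewrite /= cos0 subrr expr0n /= mul0r addr0.
move=> h'; lra.
Qed.


Lemma sin_ge (x : R) : 0 <= x -> x - x ^+ 3 / 6 <= sin x.
Proof.
move=> x0.
have hd : forall y : R, is_derive y (1:R) (fun x : R => sin x - x + x ^+ 3 / 6) (cos y - 1 + y ^+ 2 / 2).
  move=> y; refine (is_derive_eq (is_deriveD (is_deriveB (is_derive_sin y) (is_derive_id y (1:R)))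
     (is_deriveM (is_deriveX 3 (is_derive_id y 1)) (is_derive_cst (6^-1 : R) y (1:R)))) _).
  by rewrite /GRing.scale /=; field.
have h : forall z : R, 0 < z -> 0 <= cos z - 1 + z ^+ 2 / 2.
  by move=> z hz; have := cos_ge z (ltW hz); lra.
have := nonneg_deriv _ _ _ hd h x0.
rewrite /= sin0 subrr expr0n /= mul0r addr0.
move=> h'; lra.
Qed.

Lemma cos_le (x : R) : 0 <= x -> cos x <= 1 - x ^+ 2 / 2 + x ^+ 4 / 24.
Proof.
move=> x0.
have hd : forall y : R, is_derive y (1:R) (fun x : R => x ^+ 4 / 24 - x ^+ 2 / 2 - cos x) (y ^+ 3 / 6 - y + sin y).
  move=> y; refine (is_derive_eq (is_deriveB (is_deriveB
     (is_deriveM (is_deriveX 4 (is_derive_id y 1)) (is_derive_cst (24^-1 : R) y (1:R)))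
     (is_deriveM (is_deriveX 2 (is_derive_id y 1)) (is_derive_cst (2^-1 : R) y (1:R))))
     (is_derive_cos y)) _).
  by rewrite /GRing.scale /=; field.
have h : forall z : R, 0 < z -> 0 <= z ^+ 3 / 6 - z + sin z.
  by move=> z hz; have := sin_ge z (ltW hz); lra.
have := nonneg_deriv _ _ _ hd h x0.
rewrite /= cos0 expr0n /= mul0r.
move=> h'; lra.
Qed.

Lemma pi_lt : pi < 17 / 5 :> R.
Proof.
have hc : cos (17 / 10 : R) < 0.
  have h := cos_le (17 / 10) ltac:(lra).
  rewrite !exprS expr0 in h; lra.
rewrite ltNge; apply/negP => hp.
have : 0 <= cos (17 / 10 : R).
  apply: cos_ge0_pihalf; apply/andP; split; first by have := @pi_gt0 R; lra.
  lra.
lra.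
Qed.


Lemma sinDnpi (x : R) (k : nat) : sin (x + k%:R * pi) = (-1) ^+ k * sin x.
Proof.
elim: k => [|k ih]; first by rewrite mul0r addr0 expr0 mul1r.
by rewrite -addn1 natrD mulrDl mul1r addrA sinDpi ih exprD expr1 mulrN1 mulNr.
Qed.

Lemma cosDnpi (x : R) (k : nat) : cos (x + k%:R * pi) = (-1) ^+ k * cos x.
Proof.
elim: k => [|k ih]; first by rewrite mul0r addr0 expr0 mul1r.
by rewrite -addn1 natrD mulrDl mul1r addrA cosDpi ih exprD expr1 mulrN1 mulNr.
Qed.

Lemma sin_piB (x : R) : sin (pi - x) = sin x.
Proof. by rewrite sinB sinpi cospi mul0r sub0r mulN1r opprK. Qed.

Lemma sin_gt_mono (a b : R) : 0 <= a -> a < b -> b <= pi / 2 -> sin a < sin b.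
Proof.
move=> a0 ab bp.
have hp := @pi_gt0 R.
rewrite ltr_sin // in_itv /=; apply/andP; split; lra.
Qed.


Lemma sin_nonneg_band (z : R) (k : nat) : ~~ odd k ->
  k%:R * pi <= z -> z <= k.+1%:R * pi -> 0 <= sin z.
Proof.
move=> ek h1 h2.
have -> : z = (z - k%:R * pi) + k%:R * pi by rewrite subrK.
rewrite sinDnpi -signr_odd (negbTE ek) expr0 mul1r.
apply: sin_ge0_pi; apply/andP; split; first by rewrite subr_ge0.
rewrite lerBlDr; apply: (le_trans h2); rewrite -natr1 mulrDl mul1r addrC; lra.
Qed.

Lemma root_sin_neg (n : nat) (r t c : R) :
  0 < r -> 0 < t < pi -> 0 < c ->
  r ^+ n * cos (n%:R * t) * (r * sin t) + r ^+ n * sin (n%:R * t) * (r * cos t + n.+1%:R) = 0 ->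
  r ^+ n * cos (n%:R * t) * (r * cos t + n.+1%:R) - r ^+ n * sin (n%:R * t) * (r * sin t) = c ->
  sin (n%:R * t) < 0.
Proof.
move=> r0 /andP[t0 tpi] c0.
set u := r ^+ n * cos _; set v := r ^+ n * sin _; set x := r * cos t; set y := r * sin t.
move=> eI eR.
have y0 : 0 < y by rewrite mulr_gt0 // sin_gt0_pi // t0 tpi.
have key : - v * ((x + n.+1%:R) ^+ 2 + y ^+ 2) = c * y.
  rewrite -eR. have : u * y = - (v * (x + n.+1%:R)) by apply/eqP; rewrite -subr_eq0 opprK eI.
  move=> h. rewrite mulrBl (mulrAC u) h. ring.
have pos : 0 < (x + n.+1%:R) ^+ 2 + y ^+ 2 by rewrite ltr_wpDl ?sqr_ge0 // exprn_gt0.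
have cy : 0 < c * y by rewrite mulr_gt0.
have vneg : v < 0.
  rewrite -oppr_gt0; rewrite -key in cy.
  by rewrite -(pmulr_lgt0 _ pos).
have rn : 0 < r ^+ n by rewrite exprn_gt0.
by move: vneg; rewrite /v pmulr_rlt0.
Qed.


Lemma theta_gt (n : nat) (t : R) : (0 < n)%N -> 0 < t -> sin (n%:R * t) < 0 -> pi / n%:R < t.
Proof.
move=> n0 t0 hs; rewrite ltNge; apply/negP => h.
have n0' : 0 < n%:R :> R by rewrite ltr0n.
have : 0 <= sin (n%:R * t).
  apply: (@sin_nonneg_band _ 0%N) => //; first by rewrite mul0r mulr_ge0 // ltW.
  by rewrite ler_pdivlMr // [t * _]mulrC in h; rewrite mul1r.
by rewrite leNgt hs.
Qed.

Lemma theta_band (n k : nat) (t : R) : (0 < n)%N -> ~~ odd k ->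
  sin (n%:R * t) < 0 -> k%:R * pi / n%:R <= t -> t <= k.+1%:R * pi / n%:R -> False.
Proof.
move=> n0 ek hs h1 h2.
have n0' : 0 < n%:R :> R by rewrite ltr0n.
have : 0 <= sin (n%:R * t).
  apply: (@sin_nonneg_band _ k) => //.
    by rewrite ler_pdivrMr // [t * _]mulrC in h1.
  by rewrite ler_pdivlMr // [t * _]mulrC in h2.
by rewrite leNgt hs.
Qed.

Lemma even_theta (n : nat) (t : R) : odd n -> 0 < t < pi -> sin (n%:R * t) < 0 ->
  pi / n%:R < t < pi - pi / n%:R.
Proof.
move=> on /andP[t0 tpi] hs.
have n0 : (0 < n)%N by move: on; case: (n).
have n0' : 0 < n%:R :> R by rewrite ltr0n.
rewrite theta_gt //=; rewrite ltNge; apply/negP => h.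
apply: (@theta_band n n.-1 t) => //.
- by move: on; rewrite -(prednK n0) /=.
- have -> : n.-1%:R * pi / n%:R = pi - pi / n%:R :> R.
    have e : n.-1%:R = n%:R - 1 :> R by rewrite -[in RHS](prednK n0) -natr1 addrK.
    rewrite e; field; exact: lt0r_neq0.
  exact: h.
- rewrite prednK // mulrAC divff ?mul1r; [exact: ltW|exact: lt0r_neq0].
Qed.


Lemma sinc_exclude (n : nat) (r t : R) : (2 <= n)%N -> ~~ odd n -> 0 < r ->
  pi - pi / n%:R < t -> t < pi ->
  r ^+ n * cos (n%:R * t) * (r * sin t) + r ^+ n * sin (n%:R * t) * (r * cos t + n.+1%:R) = 0 ->
  r ^+ n * cos (n%:R * t) * (r * cos t + n.+1%:R) - r ^+ n * sin (n%:R * t) * (r * sin t)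
    = n%:R ^+ n -> False.
Proof.
move=> n2 en r0 h1 h2.
have n0' : 0 < n%:R :> R by rewrite ltr0n; move: n2; case: (n).
have hpi := @pi_gt0 R.
set e := pi - t.
have e0 : 0 < e by rewrite subr_gt0.
have en1 : n%:R * e < pi.
  by rewrite /e -ltr_pdivlMl // ltrBlDl -ltrBlDr mulrC.
have -> : t = pi - e by rewrite /e opprB addrC subrK.
have cte : cos (pi - e) = - cos e by rewrite cosB cospi sinpi mul0r addr0 mulN1r.
have ste : sin (pi - e) = sin e by exact: sin_piB.
have nte : n%:R * (pi - e) = - (n%:R * e) + n%:R * pi by rewrite mulrBr addrC.
have cnte : cos (n%:R * (pi - e)) = cos (n%:R * e).
  by rewrite nte cosDnpi cosN -signr_odd (negbTE en) expr0 mul1r.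
have snte : sin (n%:R * (pi - e)) = - sin (n%:R * e).
  by rewrite nte sinDnpi sinN -signr_odd (negbTE en) expr0 mul1r.
rewrite cte ste cnte snte.
set A := sin (n%:R * e); set B := sin e; set K := cos (n%:R * e); set C := cos e.
set S0 : R := n.+1%:R.
move=> eI eR.
have A0 : 0 < A by rewrite /A sin_gt0_pi // mulr_gt0.
have n2' : 2 <= n%:R :> R by rewrite (ler_nat R 2 n).
have epi : e < pi by nra.
have B0 : 0 < B by rewrite /B sin_gt0_pi // e0 epi.
have rn : 0 < r ^+ n by rewrite exprn_gt0.
have KA : K ^+ 2 + A ^+ 2 = 1 by rewrite cos2Dsin2.
have hS : sin (S0 * e) = A * C + K * B.
  by rewrite /S0 -natr1 mulrDl mul1r sinD.
have hL : cos (S0 * e) = K * C - A * B.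
  by rewrite /S0 -natr1 mulrDl mul1r cosD.
set S := sin (S0 * e) in hS *.
have q1 : r * S = S0 * A.
  have : r ^+ n * (r * S - S0 * A) = 0.
    rewrite -eI hS. ring.
  by move/eqP; rewrite mulf_eq0 (gt_eqF rn) /= subr_eq0 => /eqP.
have q2 : n%:R ^+ n * S = r ^+ n * S0 * B.
  rewrite -eR; apply/eqP; rewrite -subr_eq0; apply/eqP.
  rewrite hS in q1 *.
  have -> : (r ^+ n * K * (r * - C + S0) - r ^+ n * - A * (r * B)) * (A * C + K * B) -
      r ^+ n * S0 * B = r ^+ n * ((r * (A * C + K * B) - S0 * A) * (A * B - K * C)
       + S0 * B * (K ^+ 2 + A ^+ 2 - 1)) by ring.
  by rewrite q1 KA !subrr mul0r add0r mulr0 mulr0.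
have S0pos : 0 < S0 by rewrite ltr0n.
have Spos : 0 < S.
  have : 0 < r * S by rewrite q1 mulr_gt0.
  by rewrite pmulr_rgt0.
have q3 : n%:R ^+ n * S ^+ n.+1 = S0 ^+ n.+1 * B * A ^+ n.
  have -> : n%:R ^+ n * S ^+ n.+1 = (n%:R ^+ n * S) * S ^+ n by rewrite exprSr; ring.
  rewrite q2.
  have -> : r ^+ n * S0 * B * S ^+ n = (r * S) ^+ n * S0 * B by rewrite exprMn; ring.
  rewrite q1 exprMn exprSr; ring.
have S0e : S0 * e = n%:R * e + e by rewrite /S0 -natr1 mulrDl mul1r.
have Spi : S0 * e <= pi.
  rewrite leNgt; apply/negP => hb.
  have : sin (S0 * e) <= 0.
    have -> : S0 * e = (S0 * e - pi) + pi by rewrite subrK.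
    rewrite sinDpi oppr_le0; apply: sin_ge0_pi; apply/andP; split.
      by rewrite subr_ge0 ltW.
    have : e < pi / 2 by nra.
    lra.
  by rewrite leNgt Spos.
have sc1 : n%:R * S < S0 * A.
  have := sinc_lt (n%:R * e) (S0 * e) (mulr_gt0 n0' e0) _ Spi.
  rewrite S0e ltrDl => /(_ e0).
  rewrite -S0e -/S -/A mulrAC [S0 * e * A]mulrAC ltr_pM2r //.
have sc2 : S < S0 * B.
  have := sinc_lt e (S0 * e) e0 _ Spi.
  rewrite S0e ltrDr => /(_ (mulr_gt0 n0' e0)).
  rewrite -S0e -/S -/B mulrAC [e * S]mulrC ltr_pM2r //.
have : n%:R ^+ n * S ^+ n.+1 < S0 ^+ n.+1 * B * A ^+ n.
  have -> : n%:R ^+ n * S ^+ n.+1 = (n%:R * S) ^+ n * S by rewrite exprMn exprSr; ring.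
  have -> : S0 ^+ n.+1 * B * A ^+ n = (S0 * A) ^+ n * (S0 * B) by rewrite exprMn exprSr; ring.
  apply: ltr_pM; rewrite ?exprn_ge0 ?mulr_ge0 ?ltW //.
  by rewrite ltrXn2r ?mulr_ge0 ?ltW //; move: n2; case: (n).
by rewrite q3 ltxx.
Qed.



Lemma dist_ge (r t S0 : R) : 0 < S0 -> 0 <= sin t ->
  S0 * sin t <= Num.sqrt ((r * cos t + S0) ^+ 2 + (r * sin t) ^+ 2).
Proof.
move=> S0p st.
rewrite -(ger0_norm (mulr_ge0 (ltW S0p) st)) -sqrtr_sqr ler_sqrt; last first.
  by rewrite addr_ge0 ?sqr_ge0.
have h := cos2Dsin2 t.
have -> : (r * cos t + S0) ^+ 2 + (r * sin t) ^+ 2 = (r + cos t * S0) ^+ 2 + (S0 * sin t) ^+ 2.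
  apply/eqP; rewrite -subr_eq0; apply/eqP.
  have -> : (r * cos t + S0) ^+ 2 + (r * sin t) ^+ 2 - ((r + cos t * S0) ^+ 2 + (S0 * sin t) ^+ 2)
    = (r ^+ 2 - S0 ^+ 2) * (cos t ^+ 2 + sin t ^+ 2 - 1) by ring.
  by rewrite h subrr mulr0.
by rewrite -subr_ge0 addrK sqr_ge0.
Qed.

Lemma dist_gt (r t S0 : R) : 0 < S0 -> 0 < r -> 0 <= cos t -> 0 < sin t ->
  S0 < Num.sqrt ((r * cos t + S0) ^+ 2 + (r * sin t) ^+ 2).
Proof.
move=> S0p r0 ct st.
have e : S0 = Num.sqrt (S0 ^+ 2) by rewrite sqrtr_sqr ger0_norm // ltW.
rewrite {1}e ltr_sqrt; last first.
  by rewrite ltr_wpDl ?sqr_ge0 // exprn_gt0 // mulr_gt0.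
have h1 : S0 <= r * cos t + S0 by rewrite lerDr mulr_ge0 // ltW.
have h2 : 0 < (r * sin t) ^+ 2 by rewrite exprn_gt0 // mulr_gt0.
have h3 : S0 ^+ 2 <= (r * cos t + S0) ^+ 2 by rewrite lerXn2r // ?nnegrE ltW // (lt_le_trans S0p).
lra.
Qed.

Lemma even_root (n : nat) (r t c : R) : (3 <= n)%N -> odd n ->
  0 < r -> 0 < t < pi -> 0 < c ->
  r ^+ n * cos (n%:R * t) * (r * sin t) + r ^+ n * sin (n%:R * t) * (r * cos t + n.+1%:R) = 0 ->
  r ^+ n * cos (n%:R * t) * (r * cos t + n.+1%:R) - r ^+ n * sin (n%:R * t) * (r * sin t) = c ->
  n.+1%:R * sin (pi / n%:R) < Num.sqrt ((r * cos t + n.+1%:R) ^+ 2 + (r * sin t) ^+ 2).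
Proof.
move=> n3 on r0 ht c0 eI eR.
have hs := root_sin_neg _ _ _ _ r0 ht c0 eI eR.
have /andP[h1 h2] := even_theta _ _ on ht hs.
have n0' : 0 < n%:R :> R by rewrite ltr0n; move: n3; case: (n).
have n3' : 3 <= n%:R :> R by rewrite (ler_nat R 3 n).
have hpi := @pi_gt0 R.
have pnn : pi / n%:R * n%:R = pi :> R by rewrite divfK // lt0r_neq0.
have pn0 : 0 <= pi / n%:R :> R by rewrite divr_ge0 // ltW.
have pn : pi / n%:R <= pi / 3 :> R by nra.
move: ht => /andP[t0 tpi].
have st : 0 < sin t by rewrite sin_gt0_pi // t0.
have S0p : 0 < n.+1%:R :> R by rewrite ltr0n.
apply: (lt_le_trans _ (dist_ge r t _ S0p (ltW st))).
rewrite ltr_pM2l ?ltr0n //.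
case: (lerP t (pi / 2)) => ht2.
  by apply: sin_gt_mono.
rewrite -[sin t]sin_piB; apply: sin_gt_mono => //; lra.
Qed.


Lemma odd_root (n : nat) (r t : R) : (4 <= n)%N -> ~~ odd n ->
  0 < r -> 0 < t < pi ->
  r ^+ n * cos (n%:R * t) * (r * sin t) + r ^+ n * sin (n%:R * t) * (r * cos t + n.+1%:R) = 0 ->
  r ^+ n * cos (n%:R * t) * (r * cos t + n.+1%:R) - r ^+ n * sin (n%:R * t) * (r * sin t)
    = n%:R ^+ n ->
  n.+1%:R < Num.sqrt ((r * cos t + n.+1%:R) ^+ 2 + (r * sin t) ^+ 2) \/
  (2 * pi / n%:R < pi / 2 :> R /\
   n.+1%:R * sin (2 * pi / n%:R) < Num.sqrt ((r * cos t + n.+1%:R) ^+ 2 + (r * sin t) ^+ 2)).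
Proof.
move=> n4 en r0 ht eI eR.
have n0 : (0 < n)%N by move: n4; case: (n).
have n0' : 0 < n%:R :> R by rewrite ltr0n.
have c0 : 0 < n%:R ^+ n :> R by rewrite exprn_gt0.
have hs := root_sin_neg _ _ _ _ r0 ht c0 eI eR.
have hpi := @pi_gt0 R.
move: (ht) => /andP[t0 tpi].
have st : 0 < sin t by rewrite sin_gt0_pi // t0.
have S0p : 0 < n.+1%:R :> R by rewrite ltr0n.
case: (lerP 0 (cos t)) => ct.
  by left; apply: dist_gt.
right.
have t2 : pi / 2 < t.
  rewrite ltNge; apply/negP => h.
  have : 0 <= cos t by apply: cos_ge0_pihalf; apply/andP; split; lra.
  by rewrite leNgt ct.
have t3 : t <= pi - pi / n%:R.
  rewrite leNgt; apply/negP => h.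
  apply: (sinc_exclude _ _ _ _ en r0 h tpi eI eR).
  by move: n4; case: (n) => // -[|[|]].
have pnn : pi / n%:R * n%:R = pi :> R by rewrite divfK // lt0r_neq0.
have e1 : (n - 2)%:R * pi / n%:R = pi - 2 * pi / n%:R :> R.
  rewrite natrB; last by move: n4; case: (n) => // -[|[|]].
  by field; rewrite lt0r_neq0.
have e2 : (n - 2).+1%:R * pi / n%:R = pi - pi / n%:R :> R.
  rewrite -addn1 natrD natrB; last by move: n4; case: (n) => // -[|[|]].
  by field; rewrite lt0r_neq0.
have t4 : t < pi - 2 * pi / n%:R.
  rewrite ltNge; apply/negP => h.
  apply: (theta_band _ (n - 2) t n0 _ hs); first by rewrite oddB ?(negbTE en) //; move: n4; case: (n) => // -[|[|]].
    by rewrite e1.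
  by rewrite e2.
have pn0 : 0 <= 2 * pi / n%:R :> R by rewrite divr_ge0 ?mulr_ge0 // ltW.
split; first lra.
apply: (lt_le_trans _ (dist_ge r t _ S0p (ltW st))).
rewrite ltr_pM2l //.
rewrite -[sin t]sin_piB; apply: sin_gt_mono => //; lra.
Qed.


Lemma pi_lt_s (n : nat) : (3 <= n)%N -> pi < n.+1%:R * sin (pi / n%:R) :> R.
Proof.
move=> n3.
have N3 : 3 <= n%:R :> R by rewrite (ler_nat R 3 n).
set N := n%:R in N3 *.
have N0 : 0 < N by lra.
have hpi := @pi_gt0 R.
have hp2 := pi_lt.
set x := pi / N.
have Nx : N * x = pi by rewrite /x mulrC divfK // lt0r_neq0.
have x0 : 0 < x by rewrite /x divr_gt0.
have hs := sin_ge x (ltW x0).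
have e : n.+1%:R = N + 1 :> R by rewrite -natr1.
rewrite e.
have h1 : (N * x) ^+ 2 < 289 / 25 by rewrite Nx; nra.
have h2 : (N + 1) * (N * x) ^+ 2 < 6 * N ^+ 2.
  have : (N + 1) * (N * x) ^+ 2 <= (N + 1) * (289 / 25) by rewrite ler_pM2l ?ltW //; lra.
  nra.
have h3 : (N + 1) * x ^+ 2 < 6.
  rewrite exprMn in h2.
  have : N ^+ 2 * ((N + 1) * x ^+ 2) < N ^+ 2 * 6 by lra.
  by rewrite ltr_pM2l // exprn_gt0.
have h4 : pi < (N + 1) * (x - x ^+ 3 / 6).
  rewrite -Nx.
  have -> : (N + 1) * (x - x ^+ 3 / 6) = N * x + x * (1 - (N + 1) * x ^+ 2 / 6) by ring.
  rewrite ltrDl mulr_gt0 //; lra.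
apply: (lt_le_trans h4); rewrite ler_pM2l //; lra.
Qed.

End T.

Section C.
Variable R : realType.
Local Notation C := (R[i]).

Lemma natC (k : nat) : (k%:R : C) = Complex (k%:R) 0.
Proof.
elim: k => [|k ih] //. 
by rewrite -!natr1 ih; simpc.
Qed.

Lemma powc (a t : R) (k : nat) :
  (Complex (a * cos t) (a * sin t)) ^+ k = Complex (a ^+ k * cos (k%:R * t)) (a ^+ k * sin (k%:R * t)).
Proof.
elim: k => [|k ih].
  by rewrite expr0 mul0r cos0 sin0 mulr1 mulr0.
rewrite exprSr ih; simpc.
rewrite -natr1 mulrDl mul1r cosD sinD exprSr.
congr Complex; ring.
Qed.


Lemma polar (x y : R) : 0 < y -> exists r t, [/\ 0 < r, 0 < t < pi, x = r * cos t & y = r * sin t].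
Proof.
move=> y0.
set r := Num.sqrt (x ^+ 2 + y ^+ 2).
have q0 : 0 < x ^+ 2 + y ^+ 2 by rewrite ltr_wpDl ?sqr_ge0 // exprn_gt0.
have r0 : 0 < r by rewrite sqrtr_gt0.
have r2 : r ^+ 2 = x ^+ 2 + y ^+ 2 by rewrite sqr_sqrtr // ltW.
have xr : `|x| < r.
  by rewrite /r -sqrtr_sqr ltr_sqrt // ltrDl exprn_gt0.
have xr1 : -1 < x / r < 1.
  by rewrite ltr_pdivlMr // ltr_pdivrMr // mulN1r mul1r -ltr_norml.
move: (xr1) => /andP[xa xb].
exists r, (acos (x / r)); split => //.
- by apply/andP; split; [apply: acos_gt0|apply: acos_ltpi]; rewrite ?(ltW xa) ?(ltW xb) ?xa ?xb.
- by rewrite acosK ?in_itv /= ?(ltW xa) ?(ltW xb) // mulrC divfK // lt0r_neq0.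
- rewrite sin_acos ?(ltW xa) ?(ltW xb) //.
  have -> : 1 - (x / r) ^+ 2 = (y / r) ^+ 2.
    rewrite !expr_div_n r2; field. by rewrite lt0r_neq0.
  by rewrite sqrtr_sqr ger0_norm ?divr_ge0 ?ltW // mulrC divfK // lt0r_neq0.
Qed.

Lemma root_eqs (s : nat) (a : C) : root (psi R s) a ->
   a ^+ s.-1 * (a + s%:R) = ((s.-1 ^ s.-1)%N%:R).
Proof.
by rewrite /root /psi !hornerE subr_eq0 => /eqP.
Qed.

Lemma root_polar (s : nat) (a : C) : (1 <= s)%N -> root (psi R s) a -> 0 < complex.Im a ->
  exists r t, [/\ 0 < r, 0 < t < pi,
  r ^+ s.-1 * cos (s.-1%:R * t) * (r * sin t) + r ^+ s.-1 * sin (s.-1%:R * t) * (r * cos t + s.-1.+1%:R) = 0,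
  r ^+ s.-1 * cos (s.-1%:R * t) * (r * cos t + s.-1.+1%:R) - r ^+ s.-1 * sin (s.-1%:R * t) * (r * sin t)
    = s.-1%:R ^+ s.-1 &
  cabs (s%:R + a) = Num.sqrt ((r * cos t + s.-1.+1%:R) ^+ 2 + (r * sin t) ^+ 2)].
Proof.
move=> s1 hr hy.
case: s s1 hr => // n _ hr /=.
have e := root_eqs _ _ hr.
rewrite /= in e.
case: a hr hy e => x y /= hr hy e.
have [r [t [r0 tt ex ey]]] := polar x y hy.
exists r, t.
rewrite ex ey in e *.
rewrite powc !natC in e; move: e; simpc; case => e1 e2.
split => //.
- by rewrite e1 natrX.
- rewrite /cabs natC; simpc; rewrite /=; congr Num.sqrt; ring.
Qed.

End C.

Section E.
Variable K : comNzRingType.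
Fixpoint e1 (l : seq K) : K := if l is z :: l' then z + e1 l' else 0.
Fixpoint e2 (l : seq K) : K := if l is z :: l' then z * e1 l' + e2 l' else 0.
Fixpoint e3 (l : seq K) : K := if l is z :: l' then z * e2 l' + e3 l' else 0.
Fixpoint p2 (l : seq K) : K := if l is z :: l' then z ^+ 2 + p2 l' else 0.
Fixpoint p3 (l : seq K) : K := if l is z :: l' then z ^+ 3 + p3 l' else 0.

Lemma p2E l : p2 l = e1 l ^+ 2 - 2 * e2 l.
Proof. elim: l => [|z l ih] /=; first by rewrite expr0n /=; ring. rewrite ih; ring. Qed.

Lemma p3E l : p3 l = e1 l ^+ 3 - 3 * e1 l * e2 l + 3 * e3 l.
Proof. elim: l => [|z l ih] /=; first by rewrite expr0n /=; ring. rewrite ih; ring. Qed.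

Lemma vieta (l : seq K) :
  let Q := 'X^3 * \prod_(z <- l) ('X - z%:P) in
  [/\ Q`_(size l + 3) = 1, Q`_(size l + 2) = - e1 l, Q`_(size l + 1) = e2 l,
      Q`_(size l) = - e3 l & forall k, (size l + 3 < k)%N -> Q`_k = 0].
Proof.
elim: l => [|z l ih] /=.
  rewrite big_nil mulr1 !coefXn /= oppr0; split => // k hk.
  by rewrite coefXn; case: k hk => // -[|[|[|]]].
move: ih => [h3 h2 h1 h0 hk].
set Q := 'X^3 * _ in h3 h2 h1 h0 hk.
have QE : 'X^3 * \prod_(j <- z :: l) ('X - j%:P) = ('X - z%:P) * Q.
  by rewrite big_cons /Q mulrCA.
have cf : forall i, (('X - z%:P) * Q)`_i.+1 = Q`_i - z * Q`_i.+1.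
  by move=> i; rewrite mulrBl coefB coefXM /= coefCM.
rewrite QE; split.
- rewrite addSn cf h3 hk ?mulr0 ?subr0 //; lia.
- by rewrite addSn cf -addnS h2 h3 mulr1; ring.
- by rewrite addSn cf -addnS h1 h2; ring.
- by rewrite cf -addn1 h0 h1; ring.
- move=> k hk'; case: k hk' => // k hk'.
  rewrite cf !hk ?mulr0 ?subr0 //; lia.
Qed.
End E.
Arguments e1 {K}. Arguments e2 {K}. Arguments e3 {K}. Arguments p2 {K}. Arguments p3 {K}.

Section RealArg.
Variable R : realFieldType.

Lemma p2_ge0 (l : seq R) : 0 <= p2 l.
Proof. elim: l => [|z l ih] //=; by rewrite addr_ge0 ?sqr_ge0. Qed.

Lemma p2_mem (l : seq R) x : x \in l -> x ^+ 2 <= p2 l.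
Proof.
elim: l => [|z l ih] //=; rewrite inE => /orP[/eqP->|h].
  by rewrite lerDl p2_ge0.
by rewrite (le_trans (ih h)) // lerDr sqr_ge0.
Qed.

Lemma q_ge0 (l : seq R) S : (forall x, x \in l -> -S <= x) -> 0 <= p3 l + S * p2 l.
Proof.
elim: l => [|z l ih] /= h; first by rewrite mulr0 addr0.
have hz : -S <= z by apply: h; rewrite inE eqxx.
have h' : forall x, x \in l -> -S <= x by move=> x hx; apply: h; rewrite inE hx orbT.
have ht := ih h'.
have -> : z ^+ 3 + p3 l + S * (z ^+ 2 + p2 l) = z ^+ 2 * (z + S) + (p3 l + S * p2 l) by ring.
by rewrite addr_ge0 // mulr_ge0 ?sqr_ge0 // -lerBlDr sub0r.
Qed.

Lemma q_eq0 (l : seq R) S : (forall x, x \in l -> -S <= x) -> p3 l + S * p2 l = 0 ->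
  forall x, x \in l -> x ^+ 2 * (x + S) = 0.
Proof.
elim: l => [|z l ih] //= h.
have hz : -S <= z by apply: h; rewrite inE eqxx.
have h' : forall x, x \in l -> -S <= x by move=> x hx; apply: h; rewrite inE hx orbT.
have ht := q_ge0 _ _ h'.
have hz' : 0 <= z ^+ 2 * (z + S) by rewrite mulr_ge0 ?sqr_ge0 // -lerBlDr sub0r.
have -> : z ^+ 3 + p3 l + S * (z ^+ 2 + p2 l) = z ^+ 2 * (z + S) + (p3 l + S * p2 l) by ring.
move=> e.
have [e1 e2] : z ^+ 2 * (z + S) = 0 /\ p3 l + S * p2 l = 0.
  split; apply/eqP; rewrite eq_le; apply/andP; split => //; lra.
move=> x; rewrite inE => /orP[/eqP->//|hx].
exact: ih.
Qed.

Lemma p2_const (l : seq R) S : (forall x, x \in l -> x = - S) -> p2 l = (size l)%:R * S ^+ 2.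
Proof.
elim: l => [|z l ih] /= h; first by rewrite mul0r.
rewrite (h z) ?inE ?eqxx // ih; last by move=> x hx; apply: h; rewrite inE hx orbT.
by rewrite -natr1; ring.
Qed.

Lemma real_contra (l : seq R) (S : R) : 0 < S -> p2 l = S ^+ 2 -> p3 l = - S ^+ 3 ->
  (forall x, x \in l -> x != 0) -> (2 <= size l)%N -> False.
Proof.
move=> S0 e2 e3 nz sz.
have lb : forall x, x \in l -> -S <= x.
  move=> x hx; have := p2_mem _ _ hx; rewrite e2 => h; nra.
have q0 : p3 l + S * p2 l = 0 by rewrite e2 e3; ring.
have all : forall x, x \in l -> x = - S.
  move=> x hx; have := q_eq0 _ _ lb q0 _ hx.
  move/eqP; rewrite mulf_eq0 sqrf_eq0 (negbTE (nz x hx)) /= addr_eq0 => /eqP //.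
have := p2_const _ _ all; rewrite e2 => h.
have : ((size l)%:R - 1) * S ^+ 2 = 0 by rewrite mulrBl -h; ring.
move/eqP; rewrite mulf_eq0 sqrf_eq0 (gt_eqF S0) orbF subr_eq0 pnatr_eq1 => /eqP h1.
by rewrite h1 in sz.
Qed.
End RealArg.
Section P.
Variable R : realType.
Local Notation C := (R[i]).

Lemma psi_monic_size (s : nat) : (2 <= s)%N ->
  lead_coef (psi R s) = 1 /\ size (psi R s) = s.+1.
Proof.
move=> s2.
set A : {poly C} := 'X^(s.-1) * ('X + (s%:R)%:P).
have mA : A \is monic by rewrite monicMl ?monicXn ?monicXaddC.
have sA : size A = s.+1.
  rewrite size_monicM ?monicXn ?size_polyXn ?size_XaddC //.
    by rewrite prednK; [rewrite addn2|apply: ltnW].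
  by rewrite -size_poly_eq0 size_XaddC.
have sc : (size (- ((s.-1 ^ s.-1)%N%:R)%:P : {poly C}) < size A)%N.
  rewrite size_polyN sA; apply: (leq_ltn_trans (size_polyC_leq1 _)); lia.
rewrite /psi -/A; split.
  by rewrite lead_coefDl // (monicP mA).
by rewrite size_polyDl.
Qed.

Lemma psi_coef_lt (s : nat) (i : nat) : (0 < i)%N -> (i < s.-1)%N -> (psi R s)`_i = 0.
Proof.
move=> i0 hi.
rewrite /psi coefB coefXnM coefC hi (gtn_eqF i0).
by rewrite subr0.
Qed.

Lemma psi_coef_n (s : nat) : (2 <= s)%N -> (psi R s)`_(s.-1) = s%:R.
Proof.
move=> s2.
rewrite /psi coefB coefXnM coefC ltnn subnn coefD coefX coefC /=.
have -> : (s.-1 == 0) = false by case: s s2 => // -[|].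
by rewrite add0r subr0.
Qed.



Lemma psi_roots (s : nat) : (4 <= s)%N -> exists r : seq C,
  [/\ psi R s = \prod_(z <- r) ('X - z%:P), size r = s, e1 r = - s%:R, e2 r = 0 & e3 r = 0].
Proof.
move=> s4.
have [ml sz] := psi_monic_size s (ltnW (ltnW s4)).
have [r hr] := closed_field_poly_normal (psi R s).
rewrite ml scale1r in hr.
have szr : size r = s.
  by move: sz; rewrite hr size_prod_XsubC => -[].
have [_ h2 h1 h0 _] := vieta _ r.
rewrite -hr szr !coefXnM in h2 h1 h0.
exists r; split => //.
- have e : (s + 2 - 3)%N = s.-1 by lia.
  rewrite ifF in h2; last by apply/negbTE; rewrite -leqNgt; lia.
  rewrite e psi_coef_n in h2; last by lia.
  by rewrite -[e1 r]opprK -h2.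
- have e : (s + 1 - 3)%N = (s.-1).-1 by lia.
  rewrite ifF in h1; last by apply/negbTE; rewrite -leqNgt; lia.
  by rewrite -h1 e psi_coef_lt //; lia.
- rewrite ifF in h0; last by apply/negbTE; rewrite -leqNgt; lia.
  by rewrite -[e3 r]opprK -h0 psi_coef_lt ?oppr0 //; lia.
Qed.


Lemma rootE (s : nat) (a : C) : root (psi R s) a = (a ^+ s.-1 * (a + s%:R) == ((s.-1 ^ s.-1)%N%:R)).
Proof. by rewrite /root /psi !hornerE subr_eq0. Qed.

Lemma root_conj (s : nat) (a : C) : root (psi R s) a -> root (psi R s) (conjc a).
Proof.
rewrite !rootE => /eqP e.
apply/eqP.
have h : conjc (a ^+ s.-1 * (a + s%:R)) = conjc ((s.-1 ^ s.-1)%N%:R : C) by rewrite e.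
rewrite rmorphM rmorphXn rmorphD rmorph_nat conjc_nat in h; exact: h.
Qed.

Lemma root_nz (s : nat) (a : C) : (2 <= s)%N -> root (psi R s) a -> a != 0.
Proof.
move=> s2; rewrite rootE; apply: contraTneq => ->.
rewrite expr0n /=.
have -> : (s.-1 == 0%N) = false by case: s s2 => // -[|].
rewrite mul0r eq_sym pnatr_eq0 -lt0n expn_gt0.
by case: s s2 => // -[|].
Qed.

Lemma e_real (l : seq C) : (forall z, z \in l -> complex.Im z = 0) ->
  [/\ e1 l = real_complex R (e1 (map (@complex.Re R) l)),
      e2 l = real_complex R (e2 (map (@complex.Re R) l)) &
      e3 l = real_complex R (e3 (map (@complex.Re R) l))].
Proof.
elim: l => [|z l ih] h /=; first by rewrite !rmorph0.
have h' : forall w, w \in l -> complex.Im w = 0 by move=> w hw; apply: h; rewrite inE hw orbT.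
have [i1 i2 i3] := ih h'.
have hz : z = real_complex R (complex.Re z).
  have := h z; rewrite inE eqxx => /(_ isT).
  by case: (z) => x y /= ->.
by rewrite i1 i2 i3 {1 3 5}hz !rmorphD !rmorphM.
Qed.


Lemma psi_upper_root (s : nat) : (4 <= s)%N -> exists a : C, root (psi R s) a /\ 0 < complex.Im a.
Proof.
move=> s4.
have [r [hr szr he1 he2 he3]] := psi_roots s s4.
case: (pselect (exists a : C, root (psi R s) a /\ 0 < complex.Im a)) => // hn.
exfalso.
have allIm : forall z, z \in r -> complex.Im z = 0.
  move=> z hz.
  have rz : root (psi R s) z by rewrite hr root_prod_XsubC.
  case: (ltrgtP (complex.Im z) 0) => // h.
    exfalso; apply: hn; exists (conjc z); split; first exact: (root_conj s z).
    by case: (z) h => x y /= h; rewrite oppr_gt0.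
  by exfalso; apply: hn; exists z.
have [f1 f2 f3] := e_real r allIm.
set xs := map (@complex.Re R) r in f1 f2 f3.
have g1 : e1 xs = - s%:R.
  apply: (@complexI R); rewrite -f1 he1 rmorphN rmorph_nat; done.
have g2 : e2 xs = 0 by apply: (@complexI R); rewrite -f2 he2 rmorph0.
have g3 : e3 xs = 0 by apply: (@complexI R); rewrite -f3 he3 rmorph0.
have S0 : 0 < s%:R :> R by rewrite ltr0n; lia.
apply: (real_contra _ xs (s%:R) S0).
- by rewrite p2E g1 g2; ring.
- by rewrite p3E g1 g2 g3; ring.
- move=> x /mapP [z hz ->].
  have rz : root (psi R s) z by rewrite hr root_prod_XsubC.
  have := root_nz s z (ltnW (ltnW s4)) rz.
  have := allIm z hz.
  by case: (z) => a b /= -> ; apply: contra => /eqP ->.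
- by rewrite size_map szr; lia.
Qed.


Lemma minlist (l : seq C) (P : pred C) (g : C -> R) (c : R) :
  (forall a, a \in l -> P a -> c < g a) ->
  exists2 m, c < m & forall a, a \in l -> P a -> m <= g a.
Proof.
elim: l => [|z l ih] h.
  by exists (c + 1) => //; lra.
have h' : forall a, a \in l -> P a -> c < g a by move=> a ha; apply: h; rewrite inE ha orbT.
have [m cm hm] := ih h'.
case Pz : (P z).
  exists (Num.min m (g z)).
    by rewrite lt_min cm /= h // inE eqxx.
  move=> a; rewrite inE => /orP[/eqP-> _|ha Pa]; first by rewrite ge_min lexx orbT.
  by rewrite ge_min hm.
exists m => // a; rewrite inE => /orP[/eqP->|ha Pa]; first by rewrite Pz.
exact: hm.
Qed.

Lemma inf_gt (s : nat) (b : R) : (4 <= s)%N ->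
  (forall a, root (psi R s) a -> 0 < complex.Im a -> b < cabs (s%:R + a)) -> b < rho_m R s.
Proof.
move=> s4 hb.
have [r [hr _ _ _ _]] := psi_roots s s4.
have hb' : forall a, a \in r -> (fun a => 0 < complex.Im a) a -> b < (fun a => cabs (s%:R + a)) a.
  by move=> a ha Pa; apply: hb => //; rewrite hr root_prod_XsubC.
have [m bm hm] := minlist r (fun a => 0 < complex.Im a) (fun a => cabs (s%:R + a)) b hb'.
apply: (lt_le_trans bm).
apply: lb_le_inf.
  have [a [ra ia]] := psi_upper_root s s4.
  by exists (cabs (s%:R + a)); exists a.
move=> y [a [ra ia] <-].
by apply: hm => //; rewrite -root_prod_XsubC -hr.
Qed.

End P.

Local Close Scope classical_set_scope.

Theorem mainTheorem18 (R : realType) (s : nat) (hs : (4 <= s)%N) :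
  (~~ odd s ->
     (s%:R * sin (pi / (s.-1)%:R) < rho_m R s) /\
     (pi < s%:R * sin (pi / (s.-1)%:R) :> R)) /\
  (odd s -> (7 <= s)%N ->
     s%:R * sin (2 * pi / (s.-1)%:R) < rho_m R s) /\
  (s = 5%N -> 5 * sin (2 * pi / 5) < rho_m R s).
Proof.
have s1 : (1 <= s)%N by lia.
have key : forall a : R[i], root (psi R s) a -> 0 < complex.Im a ->
  exists r t, [/\ 0 < r, 0 < t < pi,
  r ^+ s.-1 * cos (s.-1%:R * t) * (r * sin t) + r ^+ s.-1 * sin (s.-1%:R * t) * (r * cos t + s.-1.+1%:R) = 0,
  r ^+ s.-1 * cos (s.-1%:R * t) * (r * cos t + s.-1.+1%:R) - r ^+ s.-1 * sin (s.-1%:R * t) * (r * sin t)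
    = s.-1%:R ^+ s.-1 &
  cabs (s%:R + a) = Num.sqrt ((r * cos t + s.-1.+1%:R) ^+ 2 + (r * sin t) ^+ 2)].
  by move=> a ra ia; apply: root_polar.
have sn : s = s.-1.+1 by rewrite prednK.
have n3 : (3 <= s.-1)%N by lia.
have cpos : 0 < s.-1%:R ^+ s.-1 :> R by rewrite exprn_gt0 // ltr0n; lia.
split; [|split].
- move=> es.
  have on : odd s.-1 by move: es; rewrite {1}sn /= negbK.
  split; last by rewrite {1}sn; apply: pi_lt_s.
  apply: inf_gt => // a ra ia.
  have [r [t [r0 tt eI eR ->]]] := key a ra ia.
  rewrite {1}sn.
  exact: (even_root _ _ _ _ _ n3 on r0 tt cpos eI eR).
- move=> os s7.
  have en : ~~ odd s.-1 by move: os; rewrite {1}sn /=.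
  have n4 : (4 <= s.-1)%N by lia.
  apply: inf_gt => // a ra ia.
  have [r [t [r0 tt eI eR ->]]] := key a ra ia.
  rewrite {1}sn.
  case: (odd_root _ _ _ _ n4 en r0 tt eI eR) => [h|[_ h]] //.
  apply: (le_lt_trans _ h).
  by rewrite -[X in _ <= X]mulr1 ler_pM2l ?ltr0n // sin_le1.
- move=> s5; subst s.
  apply: inf_gt => // a ra ia.
  have [r [t [r0 tt eI eR ->]]] := key a ra ia.
  have en : ~~ odd 4 by [].
  case: (odd_root _ 4 _ _ (leqnn 4) en r0 tt eI eR) => [h|[h _]].
    apply: (le_lt_trans _ h).
    by rewrite -[X in _ <= X]mulr1 ler_pM2l ?ltr0n // sin_le1.
  exfalso; move: h.
  have -> : 2 * pi / (5.-1)%:R = pi / 2 :> R by rewrite /=; field.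
  by rewrite ltxx.
Qed.
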